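(* Let $d\ge 3$, let $\Delta$ be a shellable simplicial $(d-1)$-sphere, and let $G$ be its facet-ridge graph. Then $G$ has a good acyclic orientation.
   Context: $\Delta$ is a simplicial complex whose geometric realization is homeomorphic to the $(d-1)$-sphere; its facets are its maximal faces ($d$ elements each), and ridges are faces with $d-1$ elements. The facet-ridge graph $G$ has the facets as vertices, two facets adjacent iff they share a ridge. Shelling: a total ordering $T_1,\dots,T_n$ of the facets such that for each $2\le i\le n$, $\overline{T}_i\cap(\overline{T}_1\cup\cdots\cup\overline{T}_{i-1})$ is pure $(d-2)$-dimensional, where $\overline{T}$ is the set of all subsets of $T$; $\Delta$ is shellable if a shelling exists. For $0\le k\le d$ and a face $\sigma$ of dimension $d-k-1$ (i.e., $|\sigma|=d-k$; the empty face has dimension $-1$), let $\mathcal{V}^\Delta_k(\sigma)$ be the set of vertices of $G$ corresponding to facets of $\Delta$ containing $\sigma$, and $G[W]$ the induced subgraph on $W$. An orientation $\mathcal{O}$ of $G$ is good if for every $0\le k\le d$ and every $(d-k-1)$-dimensional face $\sigma$, the orientation induced by $\mathcal{O}$ on $G[\mathcal{V}^\Delta_k(\sigma)]$ has exactly one sink (vertex with no outgoing edge within that subgraph). It is acyclic if it has no directed cycle. *)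

(* Defs.v *)
From HB Require Import structures.
From mathcomp Require Import all_boot all_order all_algebra.
From mathcomp Require Import reals.
Set Implicit Arguments. Unset Strict Implicit. Unset Printing Implicit Defensive.
Import Order.TTheory GRing.Theory Num.Theory.
Local Open Scope ring_scope.

Section Defs.
Variable V : finType.

Definition simplicial_complex (D : {set {set V}}) : Prop :=
  set0 \in D /\ forall s t : {set V}, s \in D -> t \subset s -> t \in D.

Definition facet (D : {set {set V}}) (F : {set V}) : bool :=
  (F \in D) && [forall G in D, (F \subset G) ==> (G == F)].

Definition fr_adj (d : nat) (D : {set {set V}}) (F F' : {set V}) : bool :=
  [&& facet D F, facet D F', F != F' &
      [exists r : {set V}, [&& r \in D, #|r| == d.-1, r \subset F & r \subset F']]].

(** A family K of sets (a complex) is pure of dimension c-1: every maximal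
    element of K has exactly c elements. *)
Definition pure_card (K : {set {set V}}) (c : nat) : Prop :=
  forall s, s \in K -> (forall t, t \in K -> s \subset t -> t = s) -> #|s| = c.

(** The complex  closure(T_i) ∩ (closure(T_1) ∪ ... ∪ closure(T_{i-1}))
    for the ordering s (0-indexed position i). *)
Definition shell_int (s : seq {set V}) (i : nat) : {set {set V}} :=
  [set sg : {set V} | (sg \subset nth set0 s i) &&
                      has (fun T : {set V} => sg \subset T) (take i s)].

(** A shelling of D (pure of dimension d-1): a total ordering of all facets
    such that each intersection above (for i >= 1, 0-indexed) is pure of
    dimension d-2, i.e. its maximal faces have d-1 elements. *)
Definition shelling (d : nat) (D : {set {set V}}) (s : seq {set V}) : Prop :=
  [/\ uniq s, (forall F, (F \in s) = facet D F) &
      forall i, (0 < i < size s)%N -> pure_card (shell_int s i) d.-1].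

Definition shellable (d : nat) (D : {set {set V}}) : Prop :=
  exists s, shelling d D s.

Variable R : realType.

Definition geom_realization (D : {set {set V}}) : (V -> R) -> Prop :=
  fun x => [/\ forall v, 0 <= x v, \sum_(v : V) x v = 1 &
               [set v | x v != 0] \in D].

Definition sphere (d : nat) : ('I_d -> R) -> Prop :=
  fun y => \sum_(i < d) y i ^+ 2 = 1.

Definition cont_on (I J : finType) (A : (I -> R) -> Prop) (f : (I -> R) -> (J -> R))
  : Prop :=
  forall x, A x -> forall e : R, 0 < e -> exists2 dl : R, 0 < dl &
    forall y, A y -> (forall i, `|x i - y i| < dl) -> forall j, `|f x j - f y j| < e.

Definition homeomorphic (I J : finType) (A : (I -> R) -> Prop) (B : (J -> R) -> Prop)
  : Prop :=
  exists (f : (I -> R) -> (J -> R)) (g : (J -> R) -> (I -> R)),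
    [/\ (forall x, A x -> B (f x)), (forall y, B y -> A (g y)),
        (forall x, A x -> g (f x) = x), (forall y, B y -> f (g y) = y) &
        (cont_on A f /\ cont_on B g)].

Definition simplicial_sphere (d : nat) (D : {set {set V}}) : Prop :=
  simplicial_complex D /\ homeomorphic (geom_realization D) (@sphere d).

End Defs.

Section Orient.
Variable V : finType.

Definition fr_orientation (d : nat) (D : {set {set V}}) (O : rel {set V}) : Prop :=
  (forall F F', O F F' -> fr_adj d D F F') /\
  (forall F F', fr_adj d D F F' -> (O F F' (+) O F' F)).

Definition facets_containing (D : {set {set V}}) (sg : {set V}) : {set {set V}} :=
  [set F | facet D F && (sg \subset F)].

Definition is_sink (O : rel {set V}) (W : {set {set V}}) (F : {set V}) : bool :=
  (F \in W) && [forall F' in W, ~~ O F F'].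

Definition good_orientation (d : nat) (D : {set {set V}}) (O : rel {set V}) : Prop :=
  forall k, (k <= d)%N -> forall sg, sg \in D -> #|sg| = (d - k)%N ->
    exists F, is_sink O (facets_containing D sg) F /\
      forall F', is_sink O (facets_containing D sg) F' -> F' = F.

Definition acyclic_orientation (O : rel {set V}) : Prop :=
  forall F G, O F G -> ~~ connect O G F.

End Orient.

(* Main.v *)
Require Import Defs.
From mathcomp Require Import all_boot all_order all_algebra reals.
Set Implicit Arguments. Unset Strict Implicit. Unset Printing Implicit Defensive.

Lemma maxsup (V : finType) (K : {set {set V}}) (s : {set V}) :
  s \in K -> exists t, [/\ t \in K, s \subset t &
     forall u, u \in K -> t \subset u -> u = t].
Proof.
move=> sK.
pose P := [pred t : {set V} | (t \in K) && (s \subset t)].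
have sA : P s by rewrite /= sK subxx.
case: (@arg_maxnP _ s P (fun t => #|t|) sA).
move=> t /andP[tK st] Hmax.
exists t; split=> // u uK tu.
have := Hmax u; rewrite /= uK (subset_trans st tu) => /(_ isT) cu.
by apply/eqP; rewrite eq_sym eqEcard tu cu.
Qed.

Lemma fr_adj_sym (V : finType) d (D : {set {set V}}) F F' :
  fr_adj d D F F' -> fr_adj d D F' F.
Proof.
move=> /and4P[a b c /existsP[r /and4P[r1 r2 r3 r4]]].
rewrite /fr_adj a b eq_sym c /=; apply/existsP; exists r.
by rewrite r1 r2 r3 r4.
Qed.

Theorem proposition3p1 (R : realType) (V : finType) (d : nat)
  (D : {set {set V}}) :
  (3 <= d)%N ->
  simplicial_sphere R d D ->
  shellable d D ->
  exists O : rel {set V},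
    [/\ fr_orientation d D O, good_orientation d D O & acyclic_orientation O].
Proof.
move=> _ [[D0 Ddown] _] [s [us sfac spure]].
pose O := [rel F F' | fr_adj d D F F' && (index F' s < index F s)].
have Odec : forall F F', O F F' -> index F' s < index F s by move=> F F' /andP[].
have outE : forall F sg T : {set V}, facet D F -> sg \subset F -> facet D T -> sg \subset T ->
    index T s < index F s -> exists T2 : {set V}, (sg \subset T2) && O F T2.
  move=> F sg T fF sF fT sT iTF.
  have Fs : F \in s by rewrite sfac.
  have Ts : T \in s by rewrite sfac.
  set i := index F s.
  have nthF : nth set0 s i = F by rewrite nth_index.
  have i0 : (0 < i < size s)%N.
    by rewrite index_mem Fs andbT; apply: leq_ltn_trans iTF.
  have sgK : sg \in shell_int s i.
    rewrite inE nthF sF /=; apply/hasP; exists T => //.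
    by rewrite in_take.
  have [r [rK sr rmax]] := maxsup sgK.
  have cr := spure i i0 r rK rmax.
  move: rK; rewrite inE nthF => /andP[rF /hasP[T' T'in rT']].
  have T's : T' \in s by apply: mem_take T'in.
  have iT' : index T' s < i.
    by move: T'in; rewrite in_take.
  have fT' : facet D T' by rewrite -sfac.
  exists T'; rewrite (subset_trans sr rT') /= iT' andbT.
  rewrite /fr_adj fF fT' /=; apply/andP; split.
    by apply/eqP=> E; move: iT'; rewrite -E /i ltnn.
  apply/existsP; exists r; rewrite cr eqxx rF rT' andbT /=.
  by rewrite andbT; apply: (Ddown F) rF; move: fF => /andP[].
have idxinj : forall F F' : {set V}, F \in s -> F' \in s ->
    index F s = index F' s -> F = F'.
  by move=> F F' Fs F's E; rewrite -(nth_index set0 Fs) E nth_index.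
have adjfac : forall F F', fr_adj d D F F' -> facet D F /\ facet D F'.
  by move=> F F' /and4P[].
exists O; split.
- split; first by move=> F F' /andP[].
  move=> F F' adj; rewrite /= adj (fr_adj_sym adj) /=.
  have [fF fF'] := adjfac _ _ adj.
  have Fs : F \in s by rewrite sfac.
  have F's : F' \in s by rewrite sfac.
  have neq : F != F' by move: adj => /and4P[].
  case: (ltngtP (index F' s) (index F s)) => //= E.
  by move: neq; rewrite (idxinj _ _ Fs F's (esym E)) eqxx.
- move=> k _ sg sgD _.
  have [t [tD st tmax]] := maxsup sgD.
  have ft : facet D t.
    rewrite /facet tD /=; apply/forallP=> G; apply/implyP=> GD.
    by apply/implyP=> tG; apply/eqP; apply: tmax.
  pose P := [pred F : {set V} | F \in facets_containing D sg].
  have Pt : P t by rewrite /= inE ft st.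
  case: (@arg_minnP _ t P (fun F => index F s) Pt) => F PF Fmin.
  have Fsink : is_sink O (facets_containing D sg) F.
    rewrite /is_sink; apply/andP; split=> //; apply/forallP=> F'; apply/implyP=> F'W.
    by apply/negP=> /Odec; rewrite ltnNge Fmin.
  exists F; split=> // F' /andP[F'W F'sink].
  case: (eqVneq F' F) => // neq.
  move: PF F'W; rewrite /= !inE => /andP[fF sF] /andP[fF' sF'].
  have Fs : F \in s by rewrite sfac.
  have F's : F' \in s by rewrite sfac.
  have lt : index F s < index F' s.
    rewrite ltn_neqAle Fmin /= ?inE ?fF' ?sF' // andbT.
    by apply/eqP=> E; move: neq; rewrite (idxinj _ _ Fs F's E) eqxx.
  have [T2 /andP[sT2 OT2]] := outE F' sg F fF' sF' fF sF lt.
  have [_ fT2] := adjfac _ _ (proj1 (andP OT2)).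
  by move: F'sink => /forallP/(_ T2); rewrite inE fT2 sT2 /=; move: OT2 => /= ->.
- move=> F G /Odec lt; apply/negP=> /connectP[p pth E].
  have : index (last G p) s <= index G s.
    elim: p G pth {lt E} => //= y p IH x /andP[Oxy py].
    exact: leq_trans (IH _ py) (ltnW (Odec _ _ Oxy)).
  by rewrite -E leqNgt lt.
Qed.
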